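(* Let $(\mathbb{X},\oplus,\otimes,\mathbb{0},\mathbb{1})$ be a linearly ordered, algebraically complete idempotent semifield, and let $\bm{A}\in\mathbb{X}^{n\times n}$ be a matrix such that the matrix $\bm{B}=\bm{A}\oplus\bm{A}^{-}$ has no zero entries. Let $\mu$ be the spectral radius of $\bm{B}$ and $\bm{B}_{\mu}=\mu^{-1}\bm{B}$. Consider the problem of minimizing $d(\bm{A},\bm{x}\bm{x}^{-})$ over all regular vectors $\bm{x}=(x_j)\in\mathbb{X}^{n}$ (i.e. $x_j>\mathbb{0}$ for $j=1,\ldots,n$). Then the minimum value of this problem equals $\mu$, and the set of all solutions is $\{\bm{x}=\bm{B}_{\mu}^{\ast}\bm{u} : \bm{u}\in\mathbb{X}^n,\ \bm{u}\neq\bm{0}\}$.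
   Context: An idempotent semifield is a set $\mathbb{X}$ with associative, commutative operations $\oplus$ (addition) and $\otimes$ (multiplication, usually omitted in writing) with neutral elements $\mathbb{0}$ and $\mathbb{1}$, multiplication distributing over addition, idempotent addition ($x\oplus x=x$), and every nonzero $x$ having an inverse $x^{-1}$ with $xx^{-1}=\mathbb{1}$. It is assumed linearly ordered by the order $x\le y \iff x\oplus y=y$, and algebraically complete: $x^p=a$ is solvable for every $a$ and integer $p>0$, so rational powers are defined. (Examples: $(\mathbb{R}_{>0}\cup\{0\},\max,\times,0,1)$ and $(\mathbb{R}\cup\{-\infty\},\max,+,-\infty,0)$.) Matrix and vector addition and multiplication are defined by the usual formulas with $\oplus,\otimes$ in place of $+,\times$; $\bm{0}$ is the zero vector; a vector is regular if it has no zero entries. For a nonzero column vector $\bm{x}=(x_i)$, $\bm{x}^{-}$ is the row vector with entries $x_i^{-1}$ if $x_i\ne\mathbb{0}$ and $\mathbb{0}$ otherwise. For a nonzero matrix $\bm{A}=(a_{ij})$, $\bm{A}^{-}=(a^{-}_{ij})$ with $a^{-}_{ij}=a_{ji}^{-1}$ if $a_{ji}\neq\mathbb{0}$ and $\mathbb{0}$ otherwise. The trace is $\mathrm{tr}\,\bm{A}=a_{11}\oplus\cdots\oplus a_{nn}$. The distance between square matrices is $d(\bm{A},\bm{B})=\mathrm{tr}(\bm{B}^{-}\bm{A})\oplus\mathrm{tr}(\bm{A}^{-}\bm{B})$. $\bm{I}$ is the identity matrix ($\mathbb{1}$ on the diagonal, $\mathbb{0}$ elsewhere), $\bm{A}^0=\bm{I}$,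 $\bm{A}^p=\bm{A}^{p-1}\bm{A}$. The spectral radius of $\bm{A}\in\mathbb{X}^{n\times n}$ is $\lambda=\bigoplus_{k=1}^{n}\mathrm{tr}^{1/k}(\bm{A}^k)=\bigoplus_{k=1}^{n}\bigoplus_{1\le i_1,\ldots,i_k\le n}(a_{i_1i_2}a_{i_2i_3}\cdots a_{i_ki_1})^{1/k}$. For a square matrix $\bm{M}$ of order $n$, $\bm{M}^{\ast}=\bm{I}\oplus\bm{M}\oplus\cdots\oplus\bm{M}^{n-1}$. *)

(* Defs.v *)
From mathcomp Require Import all_boot.
Set Implicit Arguments. Unset Strict Implicit. Unset Printing Implicit Defensive.

(* A linearly ordered, algebraically complete idempotent semifield.
   [inv] is total; its value at zero is fixed to zero (a harmless convention,
   any semifield admits such a total inverse).  [root p a] is a solution of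
   x^p = a (p > 0), provided as data (algebraic completeness). *)
Record isemifield := ISemifield {
  car :> Type;
  szero : car;
  sone : car;
  sadd : car -> car -> car;
  smul : car -> car -> car;
  sinv : car -> car;
  sroot : nat -> car -> car;
  saddA : forall x y z, sadd x (sadd y z) = sadd (sadd x y) z;
  saddC : forall x y, sadd x y = sadd y x;
  sadd0 : forall x, sadd szero x = x;
  smulA : forall x y z, smul x (smul y z) = smul (smul x y) z;
  smulC : forall x y, smul x y = smul y x;
  smul1 : forall x, smul sone x = x;
  smulDl : forall x y z, smul (sadd x y) z = sadd (smul x z) (smul y z);
  smul0 : forall x, smul szero x = szero;
  sone_neq0 : sone <> szero;
  saddid : forall x, sadd x x = x;
  smulV : forall x, x <> szero -> smul x (sinv x) = sone;
  sinv0 : sinv szero = szero;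
  (* linear order: x <= y iff x + y = y *)
  slinear : forall x y, sadd x y = x \/ sadd x y = y;
  sroot_spec : forall (p : nat) (a : car), 0 < p ->
      iter p (smul (sroot p a)) sone = a
}.

Section Ops.
Variable X : isemifield.
Variable n : nat.

Definition sle (x y : X) : Prop := sadd x y = y.

Definition mx := 'I_n -> 'I_n -> X.
Definition vec := 'I_n -> X.

Definition vzero : vec := fun _ => szero X.

Definition mxadd (A B : mx) : mx := fun i j => sadd (A i j) (B i j).
Definition mxmul (A B : mx) : mx :=
  fun i j => \big[@sadd X/szero X]_(k < n) smul (A i k) (B k j).
Definition mxvmul (A : mx) (x : vec) : vec :=
  fun i => \big[@sadd X/szero X]_(k < n) smul (A i k) (x k).
Definition mxscale (c : X) (A : mx) : mx := fun i j => smul c (A i j).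
Definition mxI : mx := fun i j => if i == j then sone X else szero X.
Definition mxpow (A : mx) (p : nat) : mx := iter p (fun M => mxmul M A) mxI.
Definition mxtr (A : mx) : X := \big[@sadd X/szero X]_(i < n) A i i.

Definition mxpinv (A : mx) : mx := fun i j => sinv (A j i).
Definition outer_pinv (x : vec) : mx := fun i j => smul (x i) (sinv (x j)).

Definition mxdist (A B : mx) : X :=
  sadd (mxtr (mxmul (mxpinv B) A)) (mxtr (mxmul (mxpinv A) B)).

Definition spec_rad (A : mx) : X :=
  \big[@sadd X/szero X]_(k < n) sroot k.+1 (mxtr (mxpow A k.+1)).

Definition mxstar (M : mx) : mx :=
  fun i j => \big[@sadd X/szero X]_(k < n) mxpow M k i j.

Definition regular (x : vec) : Prop := forall j, x j <> szero X.

End Ops.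

(* Main.v *)
From Stdlib Require Import Ring Classical FunctionalExtensionality Lia.
Require Import Defs.
From mathcomp Require Import all_boot zify.
Set Implicit Arguments. Unset Strict Implicit. Unset Printing Implicit Defensive.
Section Alg.
Variable X : isemifield.
Lemma SRth : semi_ring_theory (szero X) (sone X) (@sadd X) (@smul X) eq.
Proof. constructor; intros. apply sadd0. apply saddC. apply saddA. apply smul1. apply smul0. apply smulC. apply smulA. apply smulDl. Qed.
Add Ring SR : SRth.
Local Notation "a ⊕ b" := (sadd a b) (at level 50, left associativity).
Local Notation "a ⊗ b" := (smul a b) (at level 40, left associativity).
Local Notation "a ≼ b" := (sle a b) (at level 70).
Local Notation z0 := (szero X).
Local Notation e1 := (sone X).
Implicit Types a b c d x y : X.

Definition pw (y : X) k := iter k (smul y) e1.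

Lemma le_refl a : a ≼ a. Proof. exact: saddid. Qed.
Lemma le_trans a b c : a ≼ b -> b ≼ c -> a ≼ c.
Proof. rewrite /sle => h1 h2. by rewrite -h2 saddA h1. Qed.
Lemma le_anti a b : a ≼ b -> b ≼ a -> a = b.
Proof. rewrite /sle => h1 h2. by rewrite -h1 -{1}h2 saddC. Qed.
Lemma le0 a : z0 ≼ a. Proof. exact: sadd0. Qed.
Lemma le_addl a b : a ≼ a ⊕ b. Proof. by rewrite /sle saddA saddid. Qed.
Lemma le_addr a b : b ≼ a ⊕ b. Proof. by rewrite saddC; apply: le_addl. Qed.
Lemma add_le a b c : a ≼ c -> b ≼ c -> a ⊕ b ≼ c.
Proof. rewrite /sle => h1 h2. by rewrite -saddA h2 h1. Qed.
Lemma le_mulr a b c : a ≼ b -> a ⊗ c ≼ b ⊗ c.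
Proof. rewrite /sle => h. by rewrite -smulDl h. Qed.
Lemma le_mull a b c : a ≼ b -> c ⊗ a ≼ c ⊗ b.
Proof. rewrite !(smulC c); exact: le_mulr. Qed.
Lemma le_mul a b c d : a ≼ b -> c ≼ d -> a ⊗ c ≼ b ⊗ d.
Proof. move=> h1 h2; apply: le_trans (le_mulr c h1) (le_mull b h2). Qed.
Lemma le_add a b c d : a ≼ b -> c ≼ d -> a ⊕ c ≼ b ⊕ d.
Proof. move=> h1 h2; apply: add_le. apply: le_trans h1 (le_addl _ _). apply: le_trans h2 (le_addr _ _). Qed.
Lemma le_total a b : a ≼ b \/ b ≼ a.
Proof. rewrite /sle; case: (slinear a b) => h; [right; by rewrite saddC|by left]. Qed.
Lemma le0_eq a : a ≼ z0 -> a = z0.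
Proof. rewrite /sle => h. by rewrite -h saddC sadd0. Qed.
Lemma mulr0 a : a ⊗ z0 = z0. Proof. by rewrite smulC smul0. Qed.
Lemma mulVr a : a <> z0 -> sinv a ⊗ a = e1. Proof. by move=> h; rewrite smulC smulV. Qed.
Lemma mul_neq0 a b : a <> z0 -> b <> z0 -> a ⊗ b <> z0.
Proof. move=> ha hb e; apply: hb. by rewrite -[b]smul1 -(mulVr ha) -smulA e mulr0. Qed.
Lemma inv_neq0 a : a <> z0 -> sinv a <> z0.
Proof. move=> ha e; apply: (@sone_neq0 X). by rewrite -(smulV ha) e mulr0. Qed.
Lemma le_neq0 a b : a ≼ b -> a <> z0 -> b <> z0.
Proof. move=> h ha e; apply: ha; apply: le0_eq; by rewrite -e. Qed.
Lemma le_cancel a b c : c <> z0 -> a ⊗ c ≼ b ⊗ c -> a ≼ b.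
Proof. move=> hc h. have := le_mulr (sinv c) h. by rewrite -!smulA smulV // !(smulC _ e1) !smul1. Qed.
Lemma inv_mul a b : a <> z0 -> b <> z0 -> sinv (a ⊗ b) = sinv a ⊗ sinv b.
Proof.
move=> ha hb. have hab := mul_neq0 ha hb.
have e: a ⊗ b ⊗ (sinv a ⊗ sinv b) = e1.
  transitivity ((a ⊗ sinv a) ⊗ (b ⊗ sinv b)); first ring.
  by rewrite !smulV // smul1.
transitivity (sinv (a ⊗ b) ⊗ (a ⊗ b ⊗ (sinv a ⊗ sinv b))); first by rewrite e (smulC _ e1) smul1.
transitivity ((a ⊗ b ⊗ sinv (a ⊗ b)) ⊗ (sinv a ⊗ sinv b)); first ring.
by rewrite smulV // smul1.
Qed.
Lemma inv_inv a : sinv (sinv a) = a.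
Proof.
have [->|ha] := classic (a = z0); first by rewrite !sinv0.
have hi := inv_neq0 ha.
rewrite -[sinv (sinv a)]smul1 -(smulV ha).
transitivity (a ⊗ (sinv a ⊗ sinv (sinv a))); first ring.
by rewrite smulV // smulC smul1.
Qed.
Lemma pw_mul a b k : pw (a ⊗ b) k = pw a k ⊗ pw b k.
Proof. elim: k => [|k IH] /=; first by rewrite smul1. rewrite /pw /= -!/(pw _ _) IH; ring. Qed.
Lemma pw_one k : pw e1 k = e1.
Proof. elim: k => [//|k IH]; by rewrite /pw /= -/(pw _ _) IH smul1. Qed.
Lemma pw_le a b k : a ≼ b -> pw a k ≼ pw b k.
Proof. move=> h; elim: k => [|k IH]; first exact: le_refl. exact: le_mul. Qed.
Lemma pw_neq0 a k : a <> z0 -> pw a k <> z0.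
Proof. move=> h; elim: k => [|k IH]; first exact: (@sone_neq0 X). exact: mul_neq0. Qed.
Lemma one_le_pw a k : e1 ≼ a -> e1 ≼ pw a k.
Proof. move=> h; elim: k => [|k IH]; first exact: le_refl. rewrite -(smul1 e1). exact: le_mul. Qed.
Lemma pw_ge a k : e1 ≼ a -> 0 < k -> a ≼ pw a k.
Proof.
move=> h; case: k => // k _. rewrite /pw /= -/(pw _ _).
have e : a = a ⊗ e1 by rewrite smulC smul1.
rewrite {1}e; exact: le_mull (@one_le_pw a k h).
Qed.
Lemma pw_le_inv y r k : 0 < k -> pw y k ≼ pw r k -> y ≼ r.
Proof.
move=> hk h. case: (le_total y r) => // hry.
suff -> : y = r by apply: le_refl.
have [r0|rn0] := classic (r = z0).
  subst r. have: pw y k = z0.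
    apply: le0_eq; case: k hk h => // k _; by rewrite /pw /= smul0.
  have [->//|yn0] := classic (y = z0).
  by move/(@pw_neq0 y k yn0).
pose z := y ⊗ sinv r.
have ey : y = z ⊗ r by rewrite /z -smulA (smulC (sinv r)) smulV // smulC smul1.
have z1 : e1 ≼ z.
  apply: (@le_cancel _ _ r rn0). rewrite smul1 -ey. exact: hry.
have zle : pw z k ≼ e1.
  apply: (@le_cancel _ _ (pw r k) (@pw_neq0 r k rn0)). by rewrite smul1 -pw_mul -ey.
have ez : z = e1 by apply: le_anti (le_trans (pw_ge z1 hk) zle) z1.
by rewrite ey ez smul1.
Qed.
Lemma bsum_le (I : Type) (r : seq I) (F : I -> X) c :
  (forall i, F i ≼ c) -> \big[@sadd X/z0]_(i <- r) F i ≼ c.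
Proof. move=> h; apply: (big_ind (fun x => x ≼ c)) => //; [exact: le0 | move=> x y; exact: add_le]. Qed.
Lemma le_bsum (I : eqType) (r : seq I) (F : I -> X) i0 :
  i0 \in r -> F i0 ≼ \big[@sadd X/z0]_(i <- r) F i.
Proof.
elim: r => // a r IH; rewrite inE big_cons => /orP [/eqP ->|h].
  exact: le_addl.
apply: le_trans (IH h) (le_addr _ _).
Qed.
Lemma bsum_mulr (I : Type) (r : seq I) (F : I -> X) c :
  \big[@sadd X/z0]_(i <- r) F i ⊗ c = \big[@sadd X/z0]_(i <- r) (F i ⊗ c).
Proof. apply: (big_morph (fun x => x ⊗ c)); [move=> x y; exact: smulDl | exact: smul0]. Qed.
Lemma bsum_mull (I : Type) (r : seq I) (F : I -> X) c :
  c ⊗ \big[@sadd X/z0]_(i <- r) F i = \big[@sadd X/z0]_(i <- r) (c ⊗ F i).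
Proof. rewrite smulC bsum_mulr; apply: eq_bigr => i _; exact: smulC. Qed.
Lemma le_bsum_ord m (F : 'I_m -> X) i0 : F i0 ≼ \big[@sadd X/z0]_(i < m) F i.
Proof. apply: le_bsum; exact: mem_index_enum. Qed.
Variable n : nat.
Implicit Types M : mx X n.
Fixpoint W M (a : 'I_n) (s : seq 'I_n) : X :=
  match s with [::] => e1 | b :: s' => M a b ⊗ W M b s' end.
Lemma W_cat M (a : 'I_n) s1 s2 : W M a (s1 ++ s2) = W M a s1 ⊗ W M (last a s1) s2.
Proof. elim: s1 a => [|b s1 IH] a /=; first by rewrite smul1. by rewrite IH smulA. Qed.
Lemma W_rcons M (a : 'I_n) s j : W M a (rcons s j) = W M a s ⊗ M (last a s) j.
Proof. by rewrite -cats1 W_cat /= (smulC _ e1) smul1. Qed.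
Lemma mxpowS M k : mxpow M k.+1 = mxmul (mxpow M k) M. Proof. by []. Qed.
Lemma W_lb M (a : 'I_n) s : W M a s ≼ mxpow M (size s) a (last a s).
Proof.
elim/last_ind: s => [|s j IH] /=. rewrite /mxpow /= /mxI eqxx; exact: le_refl.
rewrite W_rcons size_rcons last_rcons mxpowS /mxmul.
apply: le_trans (le_mulr _ IH) _.
exact: (le_bsum_ord (fun l => mxpow M (size s) a l ⊗ M l j)).
Qed.
Lemma W_ub M k : forall i j a c,
  (forall s, size s = k -> last i s = j -> W M i s ⊗ a ≼ c) -> mxpow M k i j ⊗ a ≼ c.
Proof.
elim: k => [|k IH] i j a c h.
  rewrite /mxpow /= /mxI. have [e|ne] := eqVneq i j; last by rewrite smul0; exact: le0.
  exact: (h [::] erefl e).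
rewrite mxpowS /mxmul bsum_mulr; apply: bsum_le => l.
rewrite -smulA; apply: IH => s hs hl.
rewrite smulA -hl -W_rcons; apply: h; by rewrite ?size_rcons ?last_rcons ?hs.
Qed.
Lemma Bk M r (x : vec X n) : (forall i k, M i k ⊗ x k ≼ r ⊗ x i) ->
  forall k i j, mxpow M k i j ⊗ x j ≼ pw r k ⊗ x i.
Proof.
move=> h; elim=> [|k IH] i j.
  rewrite /mxpow /= /mxI /pw /=. have [<-|ne] := eqVneq i j; first exact: le_refl.
  rewrite smul0; exact: le0.
rewrite mxpowS /mxmul bsum_mulr; apply: bsum_le => l.
rewrite -smulA. apply: le_trans (le_mull _ (h l j)) _.
rewrite smulA (smulC _ r) -smulA. apply: le_trans (le_mull _ (IH i l)) _.
rewrite /pw /= -/(pw _ _) smulA; exact: le_refl.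
Qed.
Lemma W_scale M c (a : 'I_n) s : W (mxscale c M) a s = pw c (size s) ⊗ W M a s.
Proof.
elim: s a => [|b s IH] a /=; first by rewrite smul1.
rewrite IH /mxscale /pw /= -/(pw _ _); ring.
Qed.
Lemma decomp (a : 'I_n) s : ~~ uniq (a :: s) ->
  exists s1 q r, s = s1 ++ rcons q (last a s1) ++ r.
Proof.
elim: s a => [|b s IH] a; first by [].
move=> hu. case: (boolP (a \in b :: s)) => [ha|ha].
  case/splitPr: ha => q r. exists [::], q, r. by rewrite /= cat_rcons.
have hb : ~~ uniq (b :: s).
  apply/negP => u; move/negP: hu; apply. by rewrite [uniq (a :: _)]cons_uniq ha u.
case/IH: hb => s1 [q [r e]]. exists (b :: s1), q, r. by rewrite /= e.
Qed.
Lemma pigeon (a : 'I_n) s : size s = n -> ~~ uniq (a :: s).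
Proof.
move=> hs; apply/negP => u.
have := uniq_leq_size (s2 := enum 'I_n) u (fun v _ => ltac:(by rewrite mem_enum)).
by rewrite size_enum_ord /= hs ltnn.
Qed.
Lemma step M (a : 'I_n) s : (forall (y : 'I_n) q, size q < n -> W M y (rcons q y) ≼ e1) ->
  size s = n -> exists s', [/\ size s' < size s, last a s' = last a s & W M a s ≼ W M a s'].
Proof.
move=> hc hs. case: (decomp (pigeon a hs)) => s1 [q [r e]].
have hq : size q < n by move: hs; rewrite e !size_cat size_rcons; lia.
exists (s1 ++ r); split.
- by rewrite e !size_cat size_rcons; lia.
- by rewrite e !last_cat last_rcons.
rewrite e !W_cat last_rcons. apply: le_mull.
rewrite -{2}(smul1 (W M _ r)). apply: le_mulr. exact: hc.
Qed.
Lemma walk_claim M : (forall (y : 'I_n) q, size q < n -> W M y (rcons q y) ≼ e1) ->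
  forall m s (a : 'I_n), size s <= m -> size s <= n -> W M a s ≼ mxstar M a (last a s).
Proof.
move=> hc; elim=> [|m IH] s a hm hn; have [hlt|hge] := ltnP (size s) n;
  try exact: le_trans (W_lb M a s) (le_bsum_ord (fun k : 'I_n => mxpow M k a (last a s)) (Ordinal hlt)).
- have hs : size s = n by apply/eqP; rewrite eqn_leq hn hge.
  case: (step a hc hs) => s' []; lia.
- have hs : size s = n by apply/eqP; rewrite eqn_leq hn hge.
  case: (step a hc hs) => s' [h1 h2 h3]. rewrite -h2.
  apply: le_trans h3 (IH _ _ _ _); lia.
Qed.
Variable A : mx X n.
Local Notation B := (mxadd A (mxpinv A)).
Local Notation mu := (spec_rad B).
Local Notation Bmu := (mxscale (sinv mu) B).
Hypothesis hB : forall i j, B i j <> z0.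

Lemma regQ (x : vec X n) c i k : regular x -> B i k ⊗ x k ≼ c ⊗ x i ->
  sinv (x i) ⊗ B i k ⊗ x k ≼ c.
Proof.
move=> hx h. have := le_mull (sinv (x i)) h.
have -> : sinv (x i) ⊗ (c ⊗ x i) = c ⊗ (sinv (x i) ⊗ x i) by ring.
by rewrite mulVr // (smulC c e1) smul1 smulA.
Qed.

Lemma dist_le (x : vec X n) c : regular x -> (forall i k, B i k ⊗ x k ≼ c ⊗ x i) ->
  mxdist A (outer_pinv x) ≼ c.
Proof.
move=> hx h. rewrite /mxdist /mxtr /mxmul /mxpinv /outer_pinv.
apply: add_le; apply: bsum_le => i; apply: bsum_le => k.
- rewrite inv_mul; [rewrite inv_inv|by []|exact: inv_neq0].
  apply: le_trans (regQ hx (h k i)).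
  have -> : sinv (x k) ⊗ x i ⊗ A k i = sinv (x k) ⊗ A k i ⊗ x i by ring.
  apply: le_mulr; apply: le_mull; exact: le_addl.
- apply: le_trans (regQ hx (h i k)).
  have -> : sinv (A k i) ⊗ (x k ⊗ sinv (x i)) = sinv (x i) ⊗ sinv (A k i) ⊗ x k by ring.
  apply: le_mulr; apply: le_mull; exact: le_addr.
Qed.

Lemma dist_Q (x : vec X n) i k : regular x ->
  B i k ⊗ x k ≼ mxdist A (outer_pinv x) ⊗ x i.
Proof.
move=> hx.
have -> : B i k ⊗ x k = (sinv (x i) ⊗ B i k ⊗ x k) ⊗ x i.
  transitivity ((sinv (x i) ⊗ x i) ⊗ (B i k ⊗ x k)); last by ring.
  by rewrite mulVr // smul1.
apply: le_mulr. rewrite /mxadd (smulC (sinv (x i))) !smulDl /mxdist.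
apply: le_add.
- rewrite /mxtr /mxmul /mxpinv /outer_pinv.
  apply: le_trans (le_bsum_ord _ k). apply: le_trans (le_bsum_ord _ i).
  rewrite inv_mul; [rewrite inv_inv|by []|exact: inv_neq0].
  have -> : A i k ⊗ sinv (x i) ⊗ x k = sinv (x i) ⊗ x k ⊗ A i k by ring.
  exact: le_refl.
- rewrite /mxtr /mxmul /mxpinv /outer_pinv.
  apply: le_trans (le_bsum_ord _ i). apply: le_trans (le_bsum_ord _ k).
  have -> : sinv (A k i) ⊗ sinv (x i) ⊗ x k = sinv (A k i) ⊗ (x k ⊗ sinv (x i)) by ring.
  exact: le_refl.
Qed.

Lemma mu_le (x : vec X n) r : regular x -> (forall i k, B i k ⊗ x k ≼ r ⊗ x i) -> mu ≼ r.
Proof.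
move=> hx h. rewrite /spec_rad. apply: bsum_le => k.
apply: (@pw_le_inv _ _ k.+1) => //.
rewrite /pw sroot_spec //. rewrite /mxtr; apply: bsum_le => i.
apply: (@le_cancel _ _ (x i) (hx i)). exact: Bk h _ _ _.
Qed.

Lemma tr_le_mu k : 0 < k <= n -> mxtr (mxpow B k) ≼ pw mu k.
Proof.
case: k => // k /= hk.
have hk' : k < n by [].
have := le_bsum_ord (fun k : 'I_n => sroot k.+1 (mxtr (mxpow B k.+1))) (Ordinal hk').
move/(pw_le k.+1). by rewrite /pw sroot_spec.
Qed.

Lemma mu_neq0 : 0 < n -> mu <> z0.
Proof.
move=> hn. pose i0 := Ordinal hn.
suff hle : B i0 i0 ≼ mu by exact (le_neq0 hle (@hB i0 i0)).
have e : forall t : X, sroot 1 t = t.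
  move=> t. have := @sroot_spec X 1 t (ltn0Sn 0). by rewrite /= (smulC _ e1) smul1.
apply: le_trans _ (le_bsum_ord _ i0). rewrite /= e.
apply: le_trans _ (le_bsum_ord _ i0).
have := W_lb B i0 [:: i0]. by rewrite /= (smulC _ e1) smul1.
Qed.

Lemma cycle_bound (y : 'I_n) q : size q < n -> W Bmu y (rcons q y) ≼ e1.
Proof.
move=> hq. have hn : 0 < n := leq_ltn_trans (leq0n _) hq.
rewrite W_scale size_rcons.
have := W_lb B y (rcons q y). rewrite size_rcons last_rcons => h1.
have h2 := le_trans h1 (le_bsum_ord (fun i => mxpow B (size q).+1 i i) y).
have h3 := le_trans h2 (tr_le_mu (k := (size q).+1) hq).
apply: le_trans (le_mull _ h3) _.
rewrite -pw_mul mulVr; last exact: mu_neq0. rewrite pw_one; exact: le_refl.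
Qed.

Lemma Bmu_neq0 i j : 0 < n -> Bmu i j <> z0.
Proof. move=> hn; apply: mul_neq0; [exact: inv_neq0 (mu_neq0 hn)| exact: hB]. Qed.

Lemma star_reg (u : vec X n) : 0 < n -> (exists j, u j <> z0) ->
  regular (mxvmul (mxstar Bmu) u).
Proof.
move=> hn [j hj] i. rewrite /mxvmul.
apply: (le_neq0 (le_bsum_ord (fun k => mxstar Bmu i k ⊗ u k) j)).
apply: mul_neq0 => //.
have [<-|ne] := eqVneq i j.
  apply: (@le_neq0 e1 _ _ (@sone_neq0 X)).
  apply: le_trans _ (le_bsum_ord (fun k : 'I_n => mxpow Bmu k i i) (Ordinal hn)).
  rewrite /mxpow /= /mxI eqxx; exact: le_refl.
have h1 : 1 < n.
  move: ne (ltn_ord i) (ltn_ord j); rewrite -(inj_eq val_inj) /=; lia.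
suff hle : Bmu i j ≼ mxstar Bmu i j by exact (le_neq0 hle (@Bmu_neq0 i j hn)).
apply: le_trans _ (le_bsum_ord (fun k : 'I_n => mxpow Bmu k i j) (Ordinal h1)).
have := W_lb Bmu i [:: j]. by rewrite /= (smulC _ e1) smul1.
Qed.

Lemma star_Q (u : vec X n) : 0 < n ->
  forall i k, B i k ⊗ mxvmul (mxstar Bmu) u k ≼ mu ⊗ mxvmul (mxstar Bmu) u i.
Proof.
move=> hn i k.
have -> : B i k = mu ⊗ Bmu i k.
  rewrite /mxscale smulA smulV; [by rewrite smul1|exact: mu_neq0].
rewrite -smulA. apply: le_mull.
rewrite /mxvmul bsum_mull. apply: bsum_le => j.
apply: le_trans _ (le_bsum_ord (fun k => mxstar Bmu i k ⊗ u k) j).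
rewrite smulA. apply: le_mulr.
rewrite /mxstar bsum_mull. apply: bsum_le => p. rewrite smulC.
apply: W_ub => s hs hl.
rewrite smulC.
have -> : Bmu i k ⊗ W Bmu k s = W Bmu i (k :: s) by [].
have -> : j = last i (k :: s) by rewrite /= hl.
apply: (walk_claim cycle_bound (m := n)); rewrite /= hs; exact: ltn_ord.
Qed.
End Alg.

Theorem theorem1 (X : isemifield) (n : nat) (A : mx X n) :
  0 < n ->
  (forall i j, mxadd A (mxpinv A) i j <> szero X) ->
  let B := mxadd A (mxpinv A) in
  let mu := spec_rad B in
  let Bmu := mxscale (sinv mu) B in
  ((forall x : vec X n, regular x -> sle mu (mxdist A (outer_pinv x))) /\
   (exists x : vec X n, regular x /\ mxdist A (outer_pinv x) = mu)) /\
  (forall x : vec X n,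
     (regular x /\ mxdist A (outer_pinv x) = mu) <->
     (exists u : vec X n, u <> @vzero X n /\ x = mxvmul (mxstar Bmu) u)).
Proof.
move=> hn hB B mu Bmu.
have Ppos : forall x : vec X n, regular x -> sle mu (mxdist A (outer_pinv x)).
  move=> x hx. apply: (mu_le hx) => i k. exact: dist_Q.
have Pstar : forall u : vec X n, (exists j, u j <> szero X) ->
   regular (mxvmul (mxstar Bmu) u) /\ mxdist A (outer_pinv (mxvmul (mxstar Bmu) u)) = mu.
  move=> u hu. have hr := star_reg hB hn hu. split => //.
  apply: le_anti; [apply: (dist_le hr); exact: star_Q hB u hn | exact: Ppos].
split; first split => //.
  have [hr he] := Pstar (fun _ => sone X) (ex_intro _ (Ordinal hn) (@sone_neq0 X)).
  by exists (mxvmul (mxstar Bmu) (fun _ => sone X)).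
move=> x; split.
- case=> hx hD.
  have hmu : mu <> szero X := mu_neq0 hB hn.
  have hQ : forall i k, sle (smul (Bmu i k) (x k)) (smul (sone X) (x i)).
    move=> i k. have := le_mull (sinv mu) (dist_Q A i k hx). rewrite hD.
    by rewrite smulA (smulA (sinv mu) mu) (smulC (sinv mu) mu) smulV.
  have hBk := Bk hQ.
  exists x; split.
    move=> e. apply: (hx (Ordinal hn)). by rewrite e.
  apply: functional_extensionality => i. apply: le_anti.
  + apply: le_trans _ (le_bsum_ord (fun k => smul (mxstar Bmu i k) (x k)) i).
    rewrite -{1}(smul1 (x i)). apply: le_mulr.
    apply: le_trans _ (le_bsum_ord (fun k : 'I_n => mxpow Bmu k i i) (Ordinal hn)).
    rewrite /mxpow /= /mxI eqxx; exact: le_refl.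
  + rewrite /mxvmul. apply: bsum_le => j. rewrite /mxstar bsum_mulr.
    apply: bsum_le => p. have := hBk p i j. by rewrite pw_one smul1.
- case=> u [hu ->]. apply: Pstar.
  apply: NNPP => h; apply: hu; apply: functional_extensionality => j.
  apply: NNPP => h'; apply: h; by exists j.
Qed.
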